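(* Let $n,m\ge 3$ and let $G=P_n\square P_m$ be the grid graph. Every $3$-minimal $M$ of $G$ has either (i) two vertices $(i,j)$ and $(k,j)$ with $i\neq k$ and a third vertex $(p,q)$ with $i\le p\le k$ and $q\neq j$; or (ii) two vertices $(i,j)$ and $(i,k)$ with $j\neq k$ and a third vertex $(p,q)$ with $j\le q\le k$ and $p\neq i$.
   Context: The grid graph $P_n\square P_m$ has vertex set $\{(i,j):0\le i\le n-1,\ 0\le j\le m-1\}$, with $(i,j)$ adjacent to $(k,l)$ iff $|i-k|+|j-l|=1$; distance $d((i,j),(k,l))=|i-k|+|j-l|$. A vertex $w$ resolves $u,v$ if $d(w,u)\ne d(w,v)$; a set $R$ is resolving if every pair of distinct vertices is resolved by some vertex of $R$; a $3$-minimal is a resolving set $R$ of cardinality $3$ such that no $R\setminus\{x\}$, $x\in R$, is resolving. *)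

(* Defs.v *)
From mathcomp Require Import all_boot.
Set Implicit Arguments. Unset Strict Implicit. Unset Printing Implicit Defensive.

Definition gvert (n m : nat) : finType := ('I_n * 'I_m)%type.

Definition absd (a b : nat) : nat := (a - b) + (b - a).

Definition gdist (n m : nat) (u v : gvert n m) : nat :=
  absd u.1 v.1 + absd u.2 v.2.

Definition resolves (n m : nat) (w u v : gvert n m) : bool :=
  gdist w u != gdist w v.

Definition resolving (n m : nat) (R : {set gvert n m}) : Prop :=
  forall u v : gvert n m, u != v -> exists2 w, w \in R & resolves w u v.

Definition three_minimal (n m : nat) (R : {set gvert n m}) : Prop :=
  [/\ #|R| = 3, resolving R & forall x, x \in R -> ~ resolving (R :\ x)].

(* Main.v *)
Require Import Defs.
From mathcomp Require Import all_boot.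
From mathcomp Require Import zify.
Set Warnings "-notation-overridden".
Set Implicit Arguments. Unset Strict Implicit. Unset Printing Implicit Defensive.

Definition ext (r1 r2 p1 p2 q1 q2 : nat) :=
  (p1 < r1 /\ q1 < r1 /\ p2 < r2 /\ q2 < r2) \/
  (r1 < p1 /\ r1 < q1 /\ r2 < p2 /\ r2 < q2) \/
  (p1 < r1 /\ q1 < r1 /\ r2 < p2 /\ r2 < q2) \/
  (r1 < p1 /\ r1 < q1 /\ p2 < r2 /\ q2 < r2).

Ltac sd := match goal with |- _ \/ _ => first [left; sd | right; sd] | _ => lia end.

Lemma dist3 a1 b1 a2 b2 a3 b3 : a1 <> a2 -> a1 <> a3 -> a2 <> a3 ->
  b1 <> b2 -> b1 <> b3 -> b2 <> b3 ->
  ext a1 b1 a2 b2 a3 b3 \/ ext a2 b2 a1 b1 a3 b3 \/ ext a3 b3 a1 b1 a2 b2.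
Proof. rewrite /ext => *.
have H1 : a1 < a2 \/ a2 < a1 by lia.
have H2 : a1 < a3 \/ a3 < a1 by lia.
have H3 : a3 < a2 \/ a2 < a3 by lia.
have H4 : b1 < b2 \/ b2 < b1 by lia.
have H5 : b1 < b3 \/ b3 < b1 by lia.
have H6 : b3 < b2 \/ b2 < b3 by lia.
case: H1 => ?; case: H2 => ?; case: H3 => ?; case: H4 => ?; case: H5 => ?; case: H6 => ?; sd.
Qed.

Lemma rowl a1 b1 a2 b2 a3 b3 : b1 = b2 -> a1 <> a2 -> b3 <> b1 ->
  (a1 <= a3 /\ a3 <= a2) \/ (a2 <= a3 /\ a3 <= a1) \/ ext a3 b3 a1 b1 a2 b2.
Proof. rewrite /ext => *.
have H1 : a1 < a2 \/ a2 < a1 by lia.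
have H2 : b3 < b1 \/ b1 < b3 by lia.
have H3 : a3 < a1 \/ a3 = a1 \/ a1 < a3 by lia.
have H4 : a3 < a2 \/ a3 = a2 \/ a2 < a3 by lia.
case: H1 => ?; case: H2 => ?; case: H3 => [?|[?|?]]; case: H4 => [?|[?|?]]; sd.
Qed.

Lemma coll a1 b1 a2 b2 a3 b3 : a1 = a2 -> b1 <> b2 -> a3 <> a1 ->
  (b1 <= b3 /\ b3 <= b2) \/ (b2 <= b3 /\ b3 <= b1) \/ ext a3 b3 a1 b1 a2 b2.
Proof. rewrite /ext => *.
have H1 : b1 < b2 \/ b2 < b1 by lia.
have H2 : a3 < a1 \/ a1 < a3 by lia.
have H3 : b3 < b1 \/ b3 = b1 \/ b1 < b3 by lia.
have H4 : b3 < b2 \/ b3 = b2 \/ b2 < b3 by lia.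
case: H1 => ?; case: H2 => ?; case: H3 => [?|[?|?]]; case: H4 => [?|[?|?]]; sd.
Qed.

Definition cov n m (M : {set gvert n m}) x y z :=
  forall w, w \in M -> w = x \/ w = y \/ w = z.

Definition dne n m (w : gvert n m) (u1 u2 v1 v2 : nat) :=
  absd w.1 u1 + absd w.2 u2 <> absd w.1 v1 + absd w.2 v2.

Lemma unres n m (M : {set gvert n m}) x y z (u1 u2 v1 v2 : nat) :
  cov M x y z -> resolving M -> u1 < n -> u2 < m -> v1 < n -> v2 < m ->
  (u1 <> v1 \/ u2 <> v2) ->
  dne x u1 u2 v1 v2 \/ dne y u1 u2 v1 v2 \/ dne z u1 u2 v1 v2.
Proof.
move=> cv hr hu1 hu2 hv1 hv2 hne.
case: (hr (Ordinal hu1, Ordinal hu2) (Ordinal hv1, Ordinal hv2)) => [|w wM].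
  apply/eqP => /(congr1 (fun p : gvert n m => (val p.1, val p.2))) /= [e1 e2]; lia.
rewrite /resolves /gdist /= => /eqP hw.
by case: (cv w wM) => [e|[e|e]]; subst w; [left|right;left|right;right].
Qed.

Lemma ext_false n m (M : {set gvert n m}) P Q R :
  cov M P Q R -> resolving M -> ext R.1 R.2 P.1 P.2 Q.1 Q.2 -> False.
Proof.
move=> cv hr.
have ? := ltn_ord P.1; have ? := ltn_ord P.2; have ? := ltn_ord Q.1.
have ? := ltn_ord Q.2; have ? := ltn_ord R.1; have ? := ltn_ord R.2.
case=> [|[|[|]]] h.
- move: (unres (u1 := R.1 - 1) (u2 := R.2) (v1 := R.1) (v2 := R.2 - 1) cv hr) => /(_ ltac:(lia) ltac:(lia) ltac:(lia) ltac:(lia) ltac:(lia)) [e|[e|e]]; move: e; rewrite /dne /absd; lia.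
- move: (unres (u1 := R.1) (u2 := R.2 + 1) (v1 := R.1 + 1) (v2 := R.2) cv hr) => /(_ ltac:(lia) ltac:(lia) ltac:(lia) ltac:(lia) ltac:(lia)) [e|[e|e]]; move: e; rewrite /dne /absd; lia.
- move: (unres (u1 := R.1 - 1) (u2 := R.2) (v1 := R.1) (v2 := R.2 + 1) cv hr) => /(_ ltac:(lia) ltac:(lia) ltac:(lia) ltac:(lia) ltac:(lia)) [e|[e|e]]; move: e; rewrite /dne /absd; lia.
- move: (unres (u1 := R.1) (u2 := R.2 - 1) (v1 := R.1 + 1) (v2 := R.2) cv hr) => /(_ ltac:(lia) ltac:(lia) ltac:(lia) ltac:(lia) ltac:(lia)) [e|[e|e]]; move: e; rewrite /dne /absd; lia.
Qed.

Ltac un cv hr a b c d :=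
  move: (unres (u1:=a) (u2:=b) (v1:=c) (v2:=d) cv hr) =>
   /(_ ltac:(lia) ltac:(lia) ltac:(lia) ltac:(lia) ltac:(lia));
   case; [|case]; rewrite /dne /absd; lia.

Definition adjc n m (P Q : gvert n m) :=
  ((P.1 : nat) = 0 /\ (Q.1 : nat) = n - 1 /\ (P.2 : nat) = Q.2 /\ ((P.2 : nat) = 0 \/ (P.2 : nat) = m - 1)) \/
  ((P.2 : nat) = 0 /\ (Q.2 : nat) = m - 1 /\ (P.1 : nat) = Q.1 /\ ((P.1 : nat) = 0 \/ (P.1 : nat) = n - 1)).

Lemma absd0 a : absd 0 a = a.
Proof. rewrite /absd; lia. Qed.
Lemma absdT k a : a <= k -> absd k a = k - a.
Proof. rewrite /absd; lia. Qed.

Lemma pair_res n m (M : {set gvert n m}) P Q R :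
  P \in M -> Q \in M -> P != R -> Q != R -> adjc P Q -> resolving (M :\ R).
Proof.
move=> PM QM PR QR ad u v neq.
case: (boolP (resolves P u v)) => hP; first by exists P; rewrite // !inE PR.
case: (boolP (resolves Q u v)) => hQ; first by exists Q; rewrite // !inE QR.
exfalso; move: hP hQ neq; rewrite /resolves /gdist !negbK => /eqP hP /eqP hQ.
have ? := ltn_ord u.1; have ? := ltn_ord u.2; have ? := ltn_ord v.1; have ? := ltn_ord v.2.
suff [e1 e2] : u.1 = v.1 /\ u.2 = v.2.
  by rewrite [u]surjective_pairing [v]surjective_pairing e1 e2 eqxx.
split; apply: ord_inj.
all: case: ad => [[a [b [c [d|d]]]]|[a [b [c [d|d]]]]]; move: hP hQ;
  rewrite ?a ?b -?c ?d ?absd0 ?absdT //; try lia.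
Qed.

Lemma neq_coord n m (P Q : gvert n m) : P != Q -> (P.1 : nat) <> Q.1 \/ (P.2 : nat) <> Q.2.
Proof.
case: P Q => [p1 p2] [q1 q2] /= ne.
case: (eqVneq (p1 : nat) q1) => [/val_inj e1|/eqP]; last by left.
case: (eqVneq (p2 : nat) q2) => [/val_inj e2|/eqP]; last by right.
by move: ne; rewrite e1 e2 eqxx.
Qed.

Lemma concl_row n m (M : {set gvert n m}) P Q R :
  P \in M -> Q \in M -> R \in M -> (P.2 : nat) = Q.2 -> P.1 <= R.1 -> R.1 <= Q.1 ->
  (P.1 : nat) <> Q.1 -> (R.2 : nat) <> P.2 ->
  (exists i k j p q,
      [/\ (i, j) \in M, (k, j) \in M, (p, q) \in M, i != k
        & [/\ (i <= p)%N, (p <= k)%N & q != j]]).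
Proof.
move=> PM QM RM e2 h1 h2 ne1 ne2.
exists P.1, Q.1, P.2, R.1, R.2; split.
- by rewrite -surjective_pairing.
- have QE : Q = (Q.1, P.2) by move: e2; case: Q {QM h2 ne1} => q1 q2 /= /val_inj ->.
  by rewrite -QE.
- by rewrite -surjective_pairing.
- by apply/eqP => e; apply: ne1; rewrite e.
- split => //; by apply/eqP => e; apply: ne2; rewrite e.
Qed.

Lemma concl_col n m (M : {set gvert n m}) P Q R :
  P \in M -> Q \in M -> R \in M -> (P.1 : nat) = Q.1 -> P.2 <= R.2 -> R.2 <= Q.2 ->
  (P.2 : nat) <> Q.2 -> (R.1 : nat) <> P.1 ->
  (exists i j k p q,
      [/\ (i, j) \in M, (i, k) \in M, (p, q) \in M, j != k
        & [/\ (j <= q)%N, (q <= k)%N & p != i]]).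
Proof.
move=> PM QM RM e2 h1 h2 ne1 ne2.
exists P.1, P.2, Q.2, R.1, R.2; split.
- by rewrite -surjective_pairing.
- have QE : Q = (P.1, Q.2) by move: e2; case: Q {QM h2 ne1} => q1 q2 /= /val_inj ->.
  by rewrite -QE.
- by rewrite -surjective_pairing.
- by apply/eqP => e; apply: ne1; rewrite e.
- split => //; by apply/eqP => e; apply: ne2; rewrite e.
Qed.

Lemma covP n m (M : {set gvert n m}) x y z P Q R : cov M x y z ->
  (forall w, w = x \/ w = y \/ w = z -> w = P \/ w = Q \/ w = R) -> cov M P Q R.
Proof. by move=> cv h w /cv /h. Qed.

Lemma fin n m (M : {set gvert n m}) x y z :
  (forall w, w \in M -> ~ resolving (M :\ w)) -> x \in M -> y \in M -> z \in M ->
  x != y -> x != z -> y != z ->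
  adjc x y \/ adjc y x \/ adjc x z \/ adjc z x \/ adjc y z \/ adjc z y -> False.
Proof.
move=> hmin xM yM zM xy xz yz.
have yx : y != x by rewrite eq_sym. have zx : z != x by rewrite eq_sym.
have zy : z != y by rewrite eq_sym.
case=> [h|[h|[h|[h|[h|h]]]]].
- exact: (hmin z zM (pair_res xM yM xz yz h)).
- exact: (hmin z zM (pair_res yM xM yz xz h)).
- exact: (hmin y yM (pair_res xM zM xy zy h)).
- exact: (hmin y yM (pair_res zM xM zy xy h)).
- exact: (hmin x xM (pair_res yM zM yx zx h)).
- exact: (hmin x xM (pair_res zM yM zx yx h)).
Qed.

Lemma samerow n m (M : {set gvert n m}) x y z : 3 <= n -> 3 <= m -> resolving M ->
  (forall w, w \in M -> ~ resolving (M :\ w)) -> x \in M -> y \in M -> z \in M ->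
  x != y -> x != z -> y != z -> cov M x y z ->
  (x.2 : nat) = y.2 -> (z.2 : nat) = x.2 -> False.
Proof.
move=> n3 m3 hr hmin xM yM zM xy xz yz cv e1 e2.
have ? := ltn_ord x.1; have ? := ltn_ord x.2; have ? := ltn_ord y.1.
have ? := ltn_ord y.2; have ? := ltn_ord z.1; have ? := ltn_ord z.2.
have [mid|[b0|bt]] : (0 < x.2 < m - 1) \/ (x.2 : nat) = 0 \/ (x.2 : nat) = m - 1 by lia.
- un cv hr 0 (x.2 - 1) 0 (x.2 + 1).
- have h0 : (x.1 : nat) = 0 \/ (y.1 : nat) = 0 \/ (z.1 : nat) = 0 by un cv hr 0 0 1 1.
  have h1 : (x.1 : nat) = n - 1 \/ (y.1 : nat) = n - 1 \/ (z.1 : nat) = n - 1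
    by un cv hr (n - 2) 1 (n - 1) 0.
  apply: (fin hmin xM yM zM xy xz yz).
  case: h0 => [?|[?|?]]; case: h1 => [?|[?|?]]; rewrite /adjc; sd.
- have h0 : (x.1 : nat) = 0 \/ (y.1 : nat) = 0 \/ (z.1 : nat) = 0
    by un cv hr 0 (m - 1) 1 (m - 2).
  have h1 : (x.1 : nat) = n - 1 \/ (y.1 : nat) = n - 1 \/ (z.1 : nat) = n - 1
    by un cv hr (n - 2) (m - 2) (n - 1) (m - 1).
  apply: (fin hmin xM yM zM xy xz yz).
  case: h0 => [?|[?|?]]; case: h1 => [?|[?|?]]; rewrite /adjc; sd.
Qed.

Lemma samecol n m (M : {set gvert n m}) x y z : 3 <= n -> 3 <= m -> resolving M ->
  (forall w, w \in M -> ~ resolving (M :\ w)) -> x \in M -> y \in M -> z \in M ->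
  x != y -> x != z -> y != z -> cov M x y z ->
  (x.1 : nat) = y.1 -> (z.1 : nat) = x.1 -> False.
Proof.
move=> n3 m3 hr hmin xM yM zM xy xz yz cv e1 e2.
have ? := ltn_ord x.1; have ? := ltn_ord x.2; have ? := ltn_ord y.1.
have ? := ltn_ord y.2; have ? := ltn_ord z.1; have ? := ltn_ord z.2.
have [mid|[b0|bt]] : (0 < x.1 < n - 1) \/ (x.1 : nat) = 0 \/ (x.1 : nat) = n - 1 by lia.
- un cv hr (x.1 - 1) 0 (x.1 + 1) 0.
- have h0 : (x.2 : nat) = 0 \/ (y.2 : nat) = 0 \/ (z.2 : nat) = 0 by un cv hr 0 0 1 1.
  have h1 : (x.2 : nat) = m - 1 \/ (y.2 : nat) = m - 1 \/ (z.2 : nat) = m - 1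
    by un cv hr 1 (m - 2) 0 (m - 1).
  apply: (fin hmin xM yM zM xy xz yz).
  case: h0 => [?|[?|?]]; case: h1 => [?|[?|?]]; rewrite /adjc; sd.
- have h0 : (x.2 : nat) = 0 \/ (y.2 : nat) = 0 \/ (z.2 : nat) = 0
    by un cv hr (n - 1) 0 (n - 2) 1.
  have h1 : (x.2 : nat) = m - 1 \/ (y.2 : nat) = m - 1 \/ (z.2 : nat) = m - 1
    by un cv hr (n - 2) (m - 2) (n - 1) (m - 1).
  apply: (fin hmin xM yM zM xy xz yz).
  case: h0 => [?|[?|?]]; case: h1 => [?|[?|?]]; rewrite /adjc; sd.
Qed.

Theorem proposition3 (n m : nat) (M : {set gvert n m}) :
  3 <= n -> 3 <= m -> three_minimal M ->
  (exists i k j p q,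
      [/\ (i, j) \in M, (k, j) \in M, (p, q) \in M, i != k
        & [/\ (i <= p)%N, (p <= k)%N & q != j]])
  \/
  (exists i j k p q,
      [/\ (i, j) \in M, (i, k) \in M, (p, q) \in M, j != k
        & [/\ (j <= q)%N, (q <= k)%N & p != i]]).
Proof.
move=> n3 m3 [c3 hr hmin].
have [x xM] : exists x, x \in M by apply/set0Pn; rewrite -card_gt0 c3.
have c2 : #|M :\ x| == 2.
  by move: c3; rewrite (cardsD1 x M) xM add1n => -[->].
case/cards2P: c2 => y [z [yz eqs]].
have : y \in M :\ x by rewrite eqs !inE eqxx.
have : z \in M :\ x by rewrite eqs !inE eqxx orbT.
rewrite !inE => /andP [zx zM] /andP [yx yM].
have xy : x != y by rewrite eq_sym. have xz : x != z by rewrite eq_sym.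
have cv : cov M x y z.
  move=> w wM; case: (eqVneq w x) => [->|wx]; first by left.
  have : w \in M :\ x by rewrite !inE wx.
  by rewrite eqs !inE => /orP [/eqP->|/eqP->]; tauto.
have ? := ltn_ord x.1; have ? := ltn_ord x.2; have ? := ltn_ord y.1.
have ? := ltn_ord y.2; have ? := ltn_ord z.1; have ? := ltn_ord z.2.
have := neq_coord xy; have := neq_coord xz; have := neq_coord yz => d1 d2 d3.
have cyx : cov M y x z by apply: (covP cv) => w; tauto.
have cxz : cov M x z y by apply: (covP cv) => w; tauto.
have czx : cov M z x y by apply: (covP cv) => w; tauto.
have cyz : cov M y z x by apply: (covP cv) => w; tauto.
have czy : cov M z y x by apply: (covP cv) => w; tauto.
case: (eqVneq (x.2 : nat) y.2) => [e12|n12].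
  case: (eqVneq (z.2 : nat) x.2) => [e3|n3'].
    by exfalso; apply: (samerow n3 m3 hr hmin xM yM zM xy xz yz cv).
  case: (@rowl x.1 x.2 y.1 y.2 z.1 z.2 e12 ltac:(lia) ltac:(lia)) => [[??]|[[??]|h]].
  - by left; apply: (concl_row xM yM zM) => //; lia.
  - by left; apply: (concl_row yM xM zM) => //; lia.
  - by exfalso; apply: (ext_false cv hr).
case: (eqVneq (x.2 : nat) z.2) => [e13|n13].
  case: (@rowl x.1 x.2 z.1 z.2 y.1 y.2 e13 ltac:(lia) ltac:(lia)) => [[??]|[[??]|h]].
  - by left; apply: (concl_row xM zM yM) => //; lia.
  - by left; apply: (concl_row zM xM yM) => //; lia.
  - by exfalso; apply: (ext_false cxz hr).
case: (eqVneq (y.2 : nat) z.2) => [e23|n23].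
  case: (@rowl y.1 y.2 z.1 z.2 x.1 x.2 e23 ltac:(lia) ltac:(lia)) => [[??]|[[??]|h]].
  - by left; apply: (concl_row yM zM xM) => //; lia.
  - by left; apply: (concl_row zM yM xM) => //; lia.
  - by exfalso; apply: (ext_false cyz hr).
case: (eqVneq (x.1 : nat) y.1) => [e12|m12].
  case: (eqVneq (z.1 : nat) x.1) => [e3|n3'].
    by exfalso; apply: (samecol n3 m3 hr hmin xM yM zM xy xz yz cv).
  case: (@coll x.1 x.2 y.1 y.2 z.1 z.2 e12 ltac:(lia) ltac:(lia)) => [[??]|[[??]|h]].
  - by right; apply: (concl_col xM yM zM) => //; lia.
  - by right; apply: (concl_col yM xM zM) => //; lia.
  - by exfalso; apply: (ext_false cv hr).
case: (eqVneq (x.1 : nat) z.1) => [e13|m13].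
  case: (@coll x.1 x.2 z.1 z.2 y.1 y.2 e13 ltac:(lia) ltac:(lia)) => [[??]|[[??]|h]].
  - by right; apply: (concl_col xM zM yM) => //; lia.
  - by right; apply: (concl_col zM xM yM) => //; lia.
  - by exfalso; apply: (ext_false cxz hr).
case: (eqVneq (y.1 : nat) z.1) => [e23|m23].
  case: (@coll y.1 y.2 z.1 z.2 x.1 x.2 e23 ltac:(lia) ltac:(lia)) => [[??]|[[??]|h]].
  - by right; apply: (concl_col yM zM xM) => //; lia.
  - by right; apply: (concl_col zM yM xM) => //; lia.
  - by exfalso; apply: (ext_false cyz hr).
exfalso.
have [h|[h|h]] := @dist3 x.1 x.2 y.1 y.2 z.1 z.2 ltac:(lia) ltac:(lia) ltac:(lia)
  ltac:(lia) ltac:(lia) ltac:(lia).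
- exact: (ext_false cyz hr h).
- exact: (ext_false cxz hr h).
- exact: (ext_false cv hr h).
Qed.
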